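(* Let $\Gamma$ be a finite simplicial graph in which all equivalence classes are abelian. If $\Gamma$ has a SIL, then it has a special SIL.
   Context: $\mathrm{lk}(u)$ = neighbours of $u$, $\mathrm{st}(u)=\mathrm{lk}(u)\cup\{u\}$; $u\le v$ iff $\mathrm{lk}(u)\subseteq\mathrm{st}(v)$; $u\sim v$ iff $u\le v\le u$; class $[u]$; a class is abelian if its vertices are pairwise adjacent. A SIL is a triple $(x,y\mid z)$ of pairwise non-adjacent vertices such that the component of $\Gamma\setminus(\mathrm{lk}(x)\cap\mathrm{lk}(y))$ containing $z$ contains neither $x$ nor $y$. $\mathbb{A}_\Lambda$ is the right-angled Artin group of a graph $\Lambda$; for an induced subgraph it is identified with the subgroup generated by its vertices. $\mathrm{Out}^0(\mathbb{A}_\Lambda)$ is the subgroup of $\mathrm{Out}(\mathbb{A}_\Lambda)$ generated by transvections ($v\mapsto wv$ or $v\mapsto vw$ for $v\le w$, $v\neq w$) and partial conjugations ($z\mapsto vzv^{-1}$ for $z$ in a union of components of $\Lambda\setminus\mathrm{st}(v)$). For a SIL $S=(x_1,x_2\mid x_3)$, let $\Gamma_S$ be the subgraph induced on $[x_1]\cup[x_2]\cup[x_3]$ and $\Gamma_{\le S}$ the subgraph induced on $\{u: u\le x_i\text{ for some } i\}$. The epimorphism $\mathbb{A}_\Gamma\to\mathbb{A}_{\Gamma_{\le S}}$ killing all vertices outside $\Gamma_{\le S}$ induces a homomorphism $\mathrm{Fact}:\mathrm{Out}^0(\mathbb{A}_\Gamma)\to\mathrm{Out}^0(\mathbb{A}_{\Gamma_{\le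 S}})$. The SIL $S$ is special if each $[x_i]$ is abelian and every element of the image of $\mathrm{Fact}$ preserves the conjugacy class of the subgroup $\mathbb{A}_{\Gamma_S}$. *)

(* Defs.v *)
From mathcomp Require Import all_boot.
Set Implicit Arguments. Unset Strict Implicit. Unset Printing Implicit Defensive.

(* A finite simplicial graph: vertex type T : finType, adjacency e : rel T,
   assumed symmetric and irreflexive (hypotheses of the theorem). *)

Section Graph.
Variables (T : finType) (e : rel T).

Definition lk (u : T) : {set T} := [set w | e u w].
Definition st (u : T) : {set T} := u |: lk u.
Definition vle (u v : T) : bool := lk u \subset st v.
Definition vsim (u v : T) : bool := vle u v && vle v u.
Definition vclass (u : T) : {set T} := [set w | vsim u w].
Definition abelian_class (u : T) : Prop :=
  forall a b, a \in vclass u -> b \in vclass u -> a != b -> e a b.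

Definition erestr (X : {set T}) : rel T := fun a b => [&& e a b, a \notin X & b \notin X].

Definition SIL (x y z : T) : Prop :=
  [/\ [&& x != y, x != z & y != z],
      [&& ~~ e x y, ~~ e x z & ~~ e y z],
      ~~ connect (erestr (lk x :&: lk y)) z x &
      ~~ connect (erestr (lk x :&: lk y)) z y].

(* a letter (v, b) stands for v if b = false and v^-1 if b = true *)
Definition word := seq (T * bool).

Inductive weq : word -> word -> Prop :=
| weq_refl w : weq w w
| weq_sym w1 w2 : weq w1 w2 -> weq w2 w1
| weq_trans w1 w2 w3 : weq w1 w2 -> weq w2 w3 -> weq w1 w3
| weq_red s t a b : weq (s ++ (a, b) :: (a, ~~ b) :: t) (s ++ t)
| weq_comm s t a b c d : e a c ->
    weq (s ++ (a, b) :: (c, d) :: t) (s ++ (c, d) :: (a, b) :: t).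

Definition winv (w : word) : word := rev (map (fun p => (p.1, ~~ p.2)) w).

Definition wsubst (f : T -> word) (w : word) : word :=
  flatten (map (fun p => if p.2 then winv (f p.1) else f p.1) w).

Definition over (X : {set T}) (w : word) : bool := all (fun p => p.1 \in X) w.

(* elementary generators of Out^0 (and their inverses), as maps on generators *)
Inductive elem_aut : (T -> word) -> Prop :=
| transv_l (v w : T) (b : bool) : vle v w -> v != w ->
    elem_aut (fun u => if u == v then [:: (w, b); (v, false)] else [:: (u, false)])
| transv_r (v w : T) (b : bool) : vle v w -> v != w ->
    elem_aut (fun u => if u == v then [:: (v, false); (w, b)] else [:: (u, false)])
| partconj (v : T) (C : {set T}) (b : bool) :
    C \subset ~: st v ->
    (forall a c, a \in C -> connect (erestr (st v)) a c -> c \in C) ->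
    elem_aut (fun u => if u \in C then [:: (v, b); (u, false); (v, ~~ b)]
                       else [:: (u, false)]).

(* automorphisms (on generators) lying in the subgroup generated by the
   elementary ones; their classes form Out^0(A_Gamma) *)
Inductive aut0 : (T -> word) -> Prop :=
| aut0_id : aut0 (fun u => [:: (u, false)])
| aut0_comp f g : aut0 f -> elem_aut g -> aut0 (fun u => wsubst f (g u)).

Definition GammaS (x1 x2 x3 : T) : {set T} := vclass x1 :|: vclass x2 :|: vclass x3.
Definition GammaLeS (x1 x2 x3 : T) : {set T} :=
  [set u | [|| vle u x1, vle u x2 | vle u x3]].

Definition erase (X : {set T}) (w : word) : word := filter (fun p => p.1 \in X) w.

Definition Fact (x1 x2 x3 : T) (phi : T -> word) (w : word) : word :=
  erase (GammaLeS x1 x2 x3) (wsubst phi w).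

Definition preserves_conj (x1 x2 x3 : T) (phi : T -> word) : Prop :=
  exists g : word, over (GammaLeS x1 x2 x3) g /\
    (forall w, over (GammaS x1 x2 x3) w ->
       exists w', over (GammaS x1 x2 x3) w' /\
                  weq (Fact x1 x2 x3 phi w) (g ++ w' ++ winv g)) /\
    (forall w', over (GammaS x1 x2 x3) w' ->
       exists w, over (GammaS x1 x2 x3) w /\
                  weq (Fact x1 x2 x3 phi w) (g ++ w' ++ winv g)).

Definition special_SIL (x1 x2 x3 : T) : Prop :=
  [/\ SIL x1 x2 x3, abelian_class x1, abelian_class x2, abelian_class x3 &
      forall phi, aut0 phi -> preserves_conj x1 x2 x3 phi].

End Graph.

(* Main.v *)
From Stdlib Require Import Setoid Morphisms.
Require Import Defs.
From mathcomp Require Import all_boot.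
Set Implicit Arguments. Unset Strict Implicit. Unset Printing Implicit Defensive.


Section Words.
Variables (T : finType) (e : rel T).
Local Notation W := (weq e).
Implicit Types (a b c d w x y s t : word T) (p : T * bool) (f g : T -> word T) (X : {set T}).

#[local] Instance weq_equiv : Equivalence W.
Proof. split; [exact: weq_refl | exact: weq_sym | exact: weq_trans]. Qed.

Lemma weq_catl s a b : W a b -> W (s ++ a) (s ++ b).
Proof.
elim=> [w|w1 w2 _ IH|w1 w2 w3 _ IH1 _ IH2|s0 t a0 b0|s0 t a0 b0 c d H].
- reflexivity.
- by symmetry.
- by rewrite IH1.
- rewrite !catA; exact: (weq_red e (s ++ s0) t a0 b0).
- by rewrite !catA; apply: weq_comm.
Qed.

Lemma weq_catr t a b : W a b -> W (a ++ t) (b ++ t).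
Proof.
elim=> [w|w1 w2 _ IH|w1 w2 w3 _ IH1 _ IH2|s0 t0 a0 b0|s0 t0 a0 b0 c d H].
- reflexivity.
- by symmetry.
- by rewrite IH1.
- rewrite -!catA /=; exact: (weq_red e s0 (t0 ++ t) a0 b0).
- by rewrite -!catA /=; apply: weq_comm.
Qed.

#[local] Instance cat_proper : Proper (W ==> W ==> W) (@cat (T * bool)).
Proof.
move=> a b Hab c d Hcd; apply: (weq_trans (weq_catr c Hab)); exact: weq_catl.
Qed.

#[local] Instance cons_proper p : Proper (W ==> W) (cons p).
Proof. move=> a b H; exact: (weq_catl [:: p] H). Qed.

Lemma weq_red1 p t : W (p :: (p.1, ~~ p.2) :: t) t.
Proof. case: p => a b; exact: (weq_red e [::] t a b). Qed.

Lemma winv_cat a b : winv (a ++ b) = winv b ++ winv a.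
Proof. by rewrite /winv map_cat rev_cat. Qed.

Lemma winv_cons p w : winv (p :: w) = winv w ++ [:: (p.1, ~~ p.2)].
Proof. by rewrite -cat1s winv_cat. Qed.

Lemma winvK w : winv (winv w) = w.
Proof.
rewrite /winv map_rev revK -map_comp -[RHS]map_id; apply: eq_map => -[a b] /=.
by rewrite negbK.
Qed.

Lemma winv_nil : winv (T:=T) [::] = [::]. Proof. by []. Qed.

Lemma weq_invr w : W (w ++ winv w) [::].
Proof.
elim: w => [|p w IH] //=; first reflexivity.
rewrite winv_cons catA IH /=; exact: weq_red1.
Qed.

Lemma weq_invl w : W (winv w ++ w) [::].
Proof. by have := weq_invr (winv w); rewrite winvK. Qed.

Lemma weq_winv a b : W a b -> W (winv a) (winv b).
Proof.
elim=> [w|w1 w2 _ IH|w1 w2 w3 _ IH1 _ IH2|s0 t a0 b0|s0 t a0 b0 c d H].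
- reflexivity.
- by symmetry.
- by rewrite IH1.
- rewrite !winv_cat !winv_cons /= -!catA /= negbK.
  exact: (weq_red e (winv t) (winv s0) a0 b0).
- rewrite !winv_cat !winv_cons /= -!catA /=.
  symmetry; exact: (weq_comm (winv t) (winv s0) (~~ b0) (~~ d) H).
Qed.

#[local] Instance winv_proper : Proper (W ==> W) (@winv T).
Proof. move=> a b; exact: weq_winv. Qed.

Definition wcomm (x y : word T) := W (x ++ y) (y ++ x).

Lemma wcomm_sym x y : wcomm x y -> wcomm y x.
Proof. rewrite /wcomm => H; by symmetry. Qed.

Lemma wcomm_invl x y : wcomm x y -> wcomm (winv x) y.
Proof.
rewrite /wcomm => H.
transitivity (winv x ++ y ++ x ++ winv x).
  by rewrite weq_invr cats0; reflexivity.
rewrite (catA y x) -H catA (catA (winv x) x) weq_invl /=; reflexivity.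
Qed.

Lemma wcomm_invr x y : wcomm x y -> wcomm x (winv y).
Proof. move=> H; apply: wcomm_sym; apply: wcomm_invl; exact: wcomm_sym. Qed.

Lemma wsubst_cat f a b : wsubst f (a ++ b) = wsubst f a ++ wsubst f b.
Proof. by rewrite /wsubst map_cat flatten_cat. Qed.

Lemma wsubst_cons f p w :
  wsubst f (p :: w) = (if p.2 then winv (f p.1) else f p.1) ++ wsubst f w.
Proof. by []. Qed.

Lemma wsubst_winv f w : wsubst f (winv w) = winv (wsubst f w).
Proof.
elim: w => [|p w IH] //.
rewrite winv_cons wsubst_cat IH wsubst_cons winv_cat /= cats0.
by case: (p.2); rewrite ?winvK.
Qed.

Lemma wsubst_comp f g w :
  wsubst f (wsubst g w) = wsubst (fun u => wsubst f (g u)) w.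
Proof.
elim: w => [|p w IH] //.
rewrite !wsubst_cons wsubst_cat IH.
by case: (p.2); rewrite ?wsubst_winv.
Qed.

Lemma wsubst_weq f :
  (forall u v, e u v -> wcomm (f u) (f v)) ->
  forall x y, W x y -> W (wsubst f x) (wsubst f y).
Proof.
move=> Hf x y.
elim=> [w|w1 w2 _ IH|w1 w2 w3 _ IH1 _ IH2|s0 t a0 b0|s0 t a0 b0 c d H].
- reflexivity.
- by symmetry.
- by rewrite IH1.
- rewrite !wsubst_cat !wsubst_cons /=.
  case: b0 => /=; [rewrite (catA (winv (f a0))) weq_invl | rewrite (catA (f a0)) weq_invr]; reflexivity.
- rewrite !wsubst_cat !wsubst_cons.
  have Hc := Hf _ _ H.
  have Hc' : wcomm (if b0 then winv (f a0) else f a0) (if d then winv (f c) else f c).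
    by case: b0; case: d; [apply: wcomm_invl; apply: wcomm_invr | apply: wcomm_invl | apply: wcomm_invr | idtac].
  set A := (if b0 then _ else _) in Hc' *; set C := (if d then _ else _) in Hc' *.
  rewrite (catA A C) (catA C A) Hc'; reflexivity.
Qed.

Lemma wsubst_id w : wsubst (fun u => [:: (u, false)]) w = w.
Proof. by elim: w => [|[a b] w IH] //=; rewrite wsubst_cons IH /=; case: b. Qed.

Lemma erase_cat X a b : erase X (a ++ b) = erase X a ++ erase X b.
Proof. exact: filter_cat. Qed.

Lemma erase_winv X w : erase X (winv w) = winv (erase X w).
Proof. by rewrite /erase /winv filter_rev filter_map. Qed.

Lemma weq_erase X x y : W x y -> W (erase X x) (erase X y).
Proof.
elim=> [w|w1 w2 _ IH|w1 w2 w3 _ IH1 _ IH2|s0 t a0 b0|s0 t a0 b0 c d H].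
- reflexivity.
- by symmetry.
- by rewrite IH1.
- rewrite !erase_cat /=; case Ha: (a0 \in X) => /=; last reflexivity.
  exact: (weq_red e _ _ a0 b0).
- rewrite !erase_cat /=; case Ha: (a0 \in X); case Hc: (c \in X) => /=; try reflexivity.
  exact: (weq_comm _ _ b0 d H).
Qed.

Lemma erase_over X w : Defs.over X w -> erase X w = w.
Proof. by rewrite /erase => /all_filterP. Qed.

Lemma over_erase X w : Defs.over X (erase X w).
Proof. exact: filter_all. Qed.

Lemma over_cat X a b : Defs.over X (a ++ b) = Defs.over X a && Defs.over X b.
Proof. exact: all_cat. Qed.

Lemma over_winv X w : Defs.over X (winv w) = Defs.over X w.
Proof. by rewrite /Defs.over /winv all_rev all_map. Qed.


Definition lc (u v : T) := (u == v) || e u v.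

Lemma wcomm_letter u (b : bool) v (d : bool) : lc u v -> wcomm [:: (u, b)] [:: (v, d)].
Proof.
rewrite /lc /wcomm /= => /orP [/eqP <-|H].
  case: b; case: d; try reflexivity.
    by rewrite (weq_red1 (u, true) [::]) (weq_red1 (u, false) [::]); reflexivity.
  by rewrite (weq_red1 (u, true) [::]) (weq_red1 (u, false) [::]); reflexivity.
exact: (weq_comm [::] [::] b d H).
Qed.

Lemma wcomm_cat x y z : wcomm x z -> wcomm y z -> wcomm (x ++ y) z.
Proof.
rewrite /wcomm => H1 H2.
by rewrite -catA H2 !catA H1; reflexivity.
Qed.

Lemma wcomm_nil x : wcomm [::] x.
Proof. by rewrite /wcomm cats0; reflexivity. Qed.

Lemma wcomm_all x y :
  (forall p q, p \in x -> q \in y -> lc p.1 q.1) -> wcomm x y.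
Proof.
elim: x => [|p x IH] H; first exact: wcomm_nil.
rewrite -cat1s; apply: wcomm_cat; last first.
  by apply: IH => p' q Hp Hq; apply: H => //; rewrite inE Hp orbT.
apply: wcomm_sym.
clear IH; have {}H : forall q, q \in y -> lc p.1 q.1 by move=> q Hq; apply: H => //; rewrite inE eqxx.
elim: y H => [|q y IHy] H; first exact: wcomm_nil.
rewrite -cat1s; apply: wcomm_cat; last first.
  by apply: IHy => q' Hq; apply: H; rewrite inE Hq orbT.
clear IHy; apply: wcomm_sym; case: p H => a b H; case: q H => c d H.
apply: wcomm_letter; exact: (H (c, d) (mem_head _ _)).
Qed.

Lemma wcomm_conj h y z : wcomm y z -> wcomm (h ++ y ++ winv h) (h ++ z ++ winv h).
Proof.
rewrite /wcomm => H.
have E x t : W ((h ++ x ++ winv h) ++ (h ++ t ++ winv h)) (h ++ (x ++ t) ++ winv h).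
  by rewrite -!catA (catA (winv h) h) weq_invl /=; reflexivity.
by rewrite !E H; reflexivity.
Qed.

Definition adjcomm f := forall u v, e u v -> wcomm (f u) (f v).

Definition kill X f := forall u, u \notin X -> W (erase X (f u)) [::].

Lemma kill_over X f x : kill X f -> Defs.over (~: X) x -> W (erase X (wsubst f x)) [::].
Proof.
move=> Hk; elim: x => [|p x IH] /=; first reflexivity.
move=> /andP [Hp Hx]; rewrite wsubst_cons erase_cat IH // cats0.
rewrite inE in Hp.
by case: (p.2); rewrite ?erase_winv Hk //; reflexivity.
Qed.

Lemma erase_wsubst_erase X f x : kill X f ->
  W (erase X (wsubst f x)) (erase X (wsubst f (erase X x))).
Proof.
move=> Hk; elim: x => [|p x IH] /=; first reflexivity.
case: ifP => Hp; rewrite !wsubst_cons !erase_cat IH; first reflexivity.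
by case: (p.2); rewrite ?erase_winv Hk ?Hp //=; reflexivity.
Qed.

Definition PC (S L : {set T}) f := exists k : word T, Defs.over L k /\
    (forall w, Defs.over S w -> exists w', Defs.over S w' /\
                  W (erase L (wsubst f w)) (k ++ w' ++ winv k)) /\
    (forall w', Defs.over S w' -> exists w, Defs.over S w /\
                  W (erase L (wsubst f w)) (k ++ w' ++ winv k)).

Lemma over_sub (A B : {set T}) w : A \subset B -> Defs.over A w -> Defs.over B w.
Proof. move=> /subsetP H; apply: sub_all => p; exact: H. Qed.

Lemma PC_id (S L : {set T}) : S \subset L -> PC S L (fun u => [:: (u, false)]).
Proof.
move=> SL; exists [::]; split => //; split.
  move=> w Hw; exists w; split => //; rewrite wsubst_id erase_over ?cats0 /=;
  [reflexivity | exact: over_sub Hw].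
move=> w Hw; exists w; split => //; rewrite wsubst_id erase_over ?cats0 /=;
  [reflexivity | exact: over_sub Hw].
Qed.

Lemma PC_comp (S L : {set T}) f g : adjcomm f -> kill L f -> PC S L f -> PC S L g ->
  PC S L (fun u => wsubst f (g u)).
Proof.
move=> Hc Hk [gf [Hgf [Ff Bf]]] [h [Hh [Fg Bg]]].
pose F x := erase L (wsubst f x).
have FW x y : W x y -> W (F x) (F y).
  by move=> H; apply: weq_erase; apply: wsubst_weq.
have Fcomp w : W (erase L (wsubst (fun u => wsubst f (g u)) w)) (F (erase L (wsubst g w))).
  by rewrite -wsubst_comp; exact: erase_wsubst_erase.
have Fconj w1 : W (F (h ++ w1 ++ winv h)) (F h ++ F w1 ++ winv (F h)).
  by rewrite /F !wsubst_cat !erase_cat wsubst_winv erase_winv; reflexivity.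
exists (F h ++ gf); split.
  by rewrite over_cat over_erase.
split.
  move=> w Hw; have [w1 [Hw1 E1]] := Fg w Hw.
  have [w2 [Hw2 E2]] := Ff w1 Hw1.
  exists w2; split => //.
  rewrite Fcomp (FW _ _ E1) Fconj.
  rewrite /F in E2 *; rewrite E2 winv_cat -!catA; reflexivity.
move=> w2 Hw2; have [w1 [Hw1 E2]] := Bf w2 Hw2.
have [w [Hw E1]] := Bg w1 Hw1.
exists w; split => //.
rewrite Fcomp (FW _ _ E1) Fconj.
rewrite /F in E2 *; rewrite E2 winv_cat -!catA; reflexivity.
Qed.

Lemma wsubst_idS (S : {set T}) k w : (forall u, u \in S -> W (k u) [:: (u, false)]) ->
  Defs.over S w -> W (wsubst k w) w.
Proof.
move=> Hk; elim: w => [|p w IH] /=; first reflexivity.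
move=> /andP [Hp Hw]; rewrite wsubst_cons IH //.
by case: p Hp => a [] /= Hp; rewrite (Hk _ Hp) /=; reflexivity.
Qed.

Lemma PC_elem (S L : {set T}) g h sigma tau : S \subset L -> Defs.over L h ->
  (forall u, u \in S -> W (erase L (g u)) (h ++ sigma u ++ winv h)) ->
  (forall u, u \in S -> Defs.over S (sigma u)) ->
  (forall u, u \in S -> Defs.over S (tau u)) ->
  (forall u, u \in S -> W (wsubst sigma (tau u)) [:: (u, false)]) ->
  PC S L g.
Proof.
move=> SL Hh Hg Hs Ht Hst.
have Fw w : Defs.over S w ->
   W (erase L (wsubst g w)) (h ++ wsubst sigma w ++ winv h).
  elim: w => [|p w IH] /=; first by symmetry; exact: weq_invr.
  move=> /andP [Hp Hw]; rewrite !wsubst_cons erase_cat IH //.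
  have E : W (erase L (if p.2 then winv (g p.1) else g p.1))
             (h ++ (if p.2 then winv (sigma p.1) else sigma p.1) ++ winv h).
    case: (p.2); last exact: Hg.
    by rewrite erase_winv (Hg _ Hp) !winv_cat winvK -catA; reflexivity.
  rewrite E -!catA (catA (winv h) h) weq_invl /=; reflexivity.
have Ow w : Defs.over S w -> Defs.over S (wsubst sigma w).
  elim: w => [|p w IH] //= /andP [Hp Hw]; rewrite wsubst_cons over_cat IH // andbT.
  by case: (p.2); rewrite ?over_winv Hs.
exists h; split => //; split.
  by move=> w Hw; exists (wsubst sigma w); split; [exact: Ow | exact: Fw].
move=> w' Hw'.
have Otw : Defs.over S (wsubst tau w').
  elim: w' Hw' => [|p w IH] //= /andP [Hp Hw]; rewrite wsubst_cons over_cat IH // andbT.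
  by case: (p.2); rewrite ?over_winv Ht.
exists (wsubst tau w'); split => //.
rewrite Fw // wsubst_comp (wsubst_idS Hst Hw'); reflexivity.
Qed.

End Words.


Section Graph2.
Variables (T : finType) (e : rel T).
Hypotheses (e_sym : symmetric e) (e_irr : irreflexive e).
Local Notation W := (weq e).
#[local] Instance weq_equiv' : Equivalence W.
Proof. split; [exact: weq_refl | exact: weq_sym | exact: weq_trans]. Qed.
#[local] Instance cat_proper' : Proper (W ==> W ==> W) (@cat (T * bool)).
Proof.
move=> a b Hab c d Hcd; apply: (weq_trans (weq_catr c Hab)); exact: weq_catl.
Qed.
#[local] Instance cons_proper' p : Proper (W ==> W) (cons p).
Proof. move=> a b H; exact: (weq_catl [:: p] H). Qed.

Lemma in_lk u w : (w \in lk e u) = e u w.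
Proof. by rewrite inE. Qed.

Lemma in_st u w : (w \in st e u) = (w == u) || e u w.
Proof. by rewrite /st in_setU1 in_lk. Qed.

Lemma vleP u v : reflect (forall w, e u w -> (w == v) || e v w) (vle e u v).
Proof.
apply: (iffP subsetP) => H w.
  by move=> Hw; rewrite -in_st; apply: H; rewrite in_lk.
by rewrite in_lk in_st; apply: H.
Qed.

Lemma vle_refl u : vle e u u.
Proof. by apply/vleP => w ->; rewrite orbT. Qed.

Lemma vle_trans u v w : vle e u v -> vle e v w -> vle e u w.
Proof.
move=> /vleP Huv /vleP Hvw; apply/vleP => a Ha.
case/orP: (Huv a Ha) => [/eqP Eav|Hva]; last exact: Hvw.
subst a.
case Evw: (v == w) => //=.
have := Hvw u; rewrite e_sym => /(_ Ha) /orP [/eqP Euw|Hwu].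
  by subst u.
have := Huv w (etrans (e_sym u w) Hwu); rewrite eq_sym Evw /= => Hvw'.
by rewrite e_sym.
Qed.

Lemma erestr_sym X : symmetric (erestr e X).
Proof. move=> a b; rewrite /erestr e_sym; by case: (a \in X); case: (b \in X); rewrite ?andbF. Qed.

Lemma conn_inv (r : rel T) (P : T -> Prop) a b :
  P a -> (forall c d, P c -> r c d -> P d) -> connect r a b -> P b.
Proof.
move=> Ha Hs /connectP [p Hp ->].
elim: p a Ha Hp => [|c p IH] a Ha //= /andP [Hac Hp].
exact: (IH c (Hs _ _ Ha Hac) Hp).
Qed.

Lemma conn_first (r : rel T) a b : connect r a b -> a != b ->
  exists c, r a c /\ connect r c b.
Proof.
move=> /connectP [[|c p] Hp ->] /=; first by rewrite eqxx.
move: Hp => /= /andP [Hac Hp] _; exists c; split => //.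
by apply/connectP; exists p.
Qed.

Lemma conn_step (r : rel T) a b c : connect r a b -> r b c -> connect r a c.
Proof. move=> H1 H2; apply: (connect_trans H1); exact: connect1. Qed.

Lemma conn_notin X a b : connect (erestr e X) a b -> a \notin X -> b \notin X.
Proof.
move=> H Ha; apply: (conn_inv (P := fun c => c \notin X)) H => //.
by move=> c d _ /and3P [].
Qed.

Lemma lc_e u v : e u v -> lc e u v.
Proof. by move=> H; rewrite /lc H orbT. Qed.

Lemma lc_sym u v : lc e u v -> lc e v u.
Proof. by rewrite /lc eq_sym e_sym. Qed.

Lemma elem_adjcomm g : elem_aut e g -> adjcomm e g.
Proof.
case=> [v w b Hvw Nvw|v w b Hvw Nvw|v C b HC Hcl] a c Hac.
- have Hw : forall c, e v c -> lc e w c.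
    move=> c' Hc'; have := vleP _ _ Hvw c' Hc'; rewrite /lc eq_sym.
    by case/orP => [->|->]; rewrite ?orbT.
  case: (eqVneq a v) => [Ea|Na]; case: (eqVneq c v) => [Ec|Nc].
  + by subst; rewrite e_irr in Hac.
  + subst a; apply: wcomm_all => p q; rewrite !inE => /orP [/eqP ->|/eqP ->] /eqP -> //=.
    exact: Hw. exact: lc_e.
  + subst c; apply: wcomm_sym; apply: wcomm_all => p q; rewrite !inE => /orP [/eqP ->|/eqP ->] /eqP -> //=.
    by apply: Hw; rewrite e_sym. by apply: lc_e; rewrite e_sym.
  + by apply: wcomm_all => p q; rewrite !inE => /eqP -> /eqP ->; apply: lc_e.
- have Hw : forall c, e v c -> lc e w c.
    move=> c' Hc'; have := vleP _ _ Hvw c' Hc'; rewrite /lc eq_sym.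
    by case/orP => [->|->]; rewrite ?orbT.
  case: (eqVneq a v) => [Ea|Na]; case: (eqVneq c v) => [Ec|Nc].
  + by subst; rewrite e_irr in Hac.
  + subst a; apply: wcomm_all => p q; rewrite !inE => /orP [/eqP ->|/eqP ->] /eqP -> //=.
    exact: lc_e. exact: Hw.
  + subst c; apply: wcomm_sym; apply: wcomm_all => p q; rewrite !inE => /orP [/eqP ->|/eqP ->] /eqP -> //=.
    by apply: lc_e; rewrite e_sym. by apply: Hw; rewrite e_sym.
  + by apply: wcomm_all => p q; rewrite !inE => /eqP -> /eqP ->; apply: lc_e.
- have notst : forall u, u \in C -> u \notin st e v.
    by move=> u Hu; have := subsetP HC u Hu; rewrite inE.
  have cross : forall a c, e a c -> a \in C -> c \notin C -> e v c.
    move=> a' c' H Ha Hc.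
    have Hs : c' \in st e v.
      apply: contraR Hc => Hc; apply: (Hcl a') => //; apply: connect1.
      by rewrite /erestr H notst.
    move: Hs; rewrite in_st => /orP [/eqP Ec|//].
    subst c'; have := notst _ Ha; rewrite in_st e_sym H orbT //.
  have crossw : forall a c, e a c -> a \in C -> c \notin C ->
      wcomm e [:: (v, b); (a, false); (v, ~~ b)] [:: (c, false)].
    move=> a' c' H Ha Hc; have Hv := cross _ _ H Ha Hc.
    apply: wcomm_all => p q; rewrite !inE => /or3P [/eqP ->|/eqP ->|/eqP ->] /eqP -> /=;
      by apply: lc_e.
  case: ifP => Ha; case: ifP => Hc.
  + have := wcomm_conj [:: (v, b)] (@wcomm_letter T e a false c false (lc_e Hac)).
    by rewrite /=.
  + by apply: crossw => //; rewrite Hc.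
  + by apply: wcomm_sym; apply: crossw => //; [rewrite e_sym | rewrite Ha].
  + by apply: wcomm_letter; apply: lc_e.
Qed.

Lemma aut0_adjcomm f : aut0 e f -> adjcomm e f.
Proof.
elim=> [|f' g _ IH Hg] a c Hac.
  by apply: wcomm_letter; apply: lc_e.
rewrite /wcomm -!wsubst_cat; apply: wsubst_weq => //.
exact: (elem_adjcomm Hg).
Qed.

Lemma aut0_kill (L : {set T}) f :
  (forall u w, vle e u w -> w \in L -> u \in L) -> aut0 e f -> kill e L f.
Proof.
move=> Ldown; elim=> [|f' g _ IH Hg] u Hu.
  by rewrite /erase /= (negbTE Hu); reflexivity.
case: Hg => [v w b Hvw Nvw|v w b Hvw Nvw|v C b HC Hcl].
- case: ifP => Euv.
    have Hw : w \notin L by apply: contra Hu => Hw; rewrite (eqP Euv); exact: Ldown Hw.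
    by apply: kill_over => //=; rewrite !inE Hw -(eqP Euv) Hu.
  by apply: kill_over => //=; rewrite !inE Hu.
- case: ifP => Euv.
    have Hw : w \notin L by apply: contra Hu => Hw; rewrite (eqP Euv); exact: Ldown Hw.
    by apply: kill_over => //=; rewrite !inE Hw -(eqP Euv) Hu.
  by apply: kill_over => //=; rewrite !inE Hu.
- case: ifP => _; last by apply: kill_over => //=; rewrite !inE Hu.
  rewrite !wsubst_cons /= cats0 !erase_cat (IH u Hu) /=.
  by case: b; rewrite /= ?erase_winv ?weq_invr ?weq_invl; reflexivity.
Qed.

End Graph2.


Section Comb.
Variables (T : finType) (e : rel T).
Hypotheses (e_sym : symmetric e) (e_irr : irreflexive e)
  (hab : forall u : T, abelian_class e u).
Local Notation W := (weq e).
#[local] Instance weq_equiv'' : Equivalence W.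
Proof. split; [exact: weq_refl | exact: weq_sym | exact: weq_trans]. Qed.

Local Notation vle := (vle e).
Local Notation lk := (lk e).
Local Notation st := (st e).
Local Notation vclass := (vclass e).
Local Notation SIL := (SIL e).
Local Notation erestr := (erestr e).

Lemma vle_adj u v w : vle u v -> e u w -> (w == v) || e v w.
Proof. by move=> /vleP H; apply: H. Qed.

Lemma in_class x u : (u \in vclass x) = vle x u && vle u x.
Proof. by rewrite inE. Qed.

Lemma class_self x : x \in vclass x.
Proof. by rewrite in_class vle_refl. Qed.

Lemma class_adj x u : u \in vclass x -> u != x -> e x u.
Proof. by move=> Hu Nux; apply: (hab (class_self x) Hu); rewrite eq_sym. Qed.

Lemma nadj v x t : vle v x -> t != x -> ~~ e x t -> ~~ e v t.
Proof.
move=> /vleP H Ntx Ext; apply/negP => Evt.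
by have := H t Evt; rewrite (negbTE Ntx) (negbTE Ext).
Qed.

Lemma SIL_sym x y z : SIL x y z -> SIL y x z.
Proof.
case=> /and3P [Nxy Nxz Nyz] /and3P [Exy Exz Eyz] Cx Cy.
split; first by rewrite eq_sym Nxy Nxz Nyz.
  by rewrite e_sym Exy Exz Eyz.
  by rewrite setIC.
by rewrite setIC.
Qed.

Lemma K3 x y z v : SIL x y z -> vle v z -> v != x -> v != y -> SIL x y v.
Proof.
move=> [/and3P [Nxy Nxz Nyz] /and3P [Exy Exz Eyz] Cx Cy] Hvz Nvx Nvy.
have Evx : ~~ e v x by apply: nadj Hvz Nxz _; rewrite e_sym.
have Evy : ~~ e v y by apply: nadj Hvz Nyz _; rewrite e_sym.
have zL : z \notin lk x :&: lk y by rewrite !inE negb_and Exz.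
have sep t : t != v -> ~~ connect (erestr (lk x :&: lk y)) z t ->
             ~~ connect (erestr (lk x :&: lk y)) v t.
  move=> Ntv Czt; apply/negP => C.
  have Nvt : v != t by rewrite eq_sym.
  have [c [/and3P [Evc _ cL] Cct]] := conn_first C Nvt.
  have := vle_adj Hvz Evc => /orP [/eqP Ecz|Ezc].
    by subst c; rewrite Cct in Czt.
  apply: (negP Czt); apply: connect_trans Cct; apply: connect1.
  by rewrite /erestr Ezc zL cL.
split.
- by rewrite Nxy eq_sym Nvx eq_sym Nvy.
- by rewrite Exy (e_sym x v) Evx (e_sym y v) Evy.
- by apply: sep => //; rewrite eq_sym.
- by apply: sep => //; rewrite eq_sym.
Qed.

Lemma K1 x y z v : SIL x y z -> vle v x -> v != y -> v != z -> ~ SIL v y z ->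
  exists a, [/\ a \in lk x :&: lk y, ~~ e v a & connect (erestr (st v)) z a].
Proof.
move=> [/and3P [Nxy Nxz Nyz] /and3P [Exy Exz Eyz] Cx Cy] Hvx Nvy Nvz NS.
set L := lk x :&: lk y in Cx Cy *.
have Evy : ~~ e v y by apply: nadj Hvx _ Exy; rewrite eq_sym.
have Evz : ~~ e v z by apply: nadj Hvx _ Exz; rewrite eq_sym.
have zL : z \notin L by rewrite !inE negb_and Exz.
have xL : x \notin L by rewrite !inE e_irr.
have vL : v \notin L by rewrite !inE negb_and (e_sym y v) Evy orbT.
set L' := lk v :&: lk y.
have H : connect (erestr L') z v || connect (erestr L') z y.
  apply/negPn/negP; rewrite negb_or => /andP [H1 H2]; apply: NS; split => //.
    by rewrite Nvy Nvz Nyz.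
  by rewrite Evy Evz Eyz.
set G := exists a, [/\ a \in L, ~~ e v a & connect (erestr (st v)) z a].
pose P c := G \/ [/\ connect (erestr L) z c, c \notin st v & connect (erestr (st v)) z c].
have HP t : connect (erestr L') z t -> P t.
  apply: conn_inv.
    by right; split => //; rewrite in_st negb_or Evz eq_sym Nvz.
  move=> c d [HG|[Zc Sc Cc]] Hcd; first by left.
  move: Hcd => /and3P [Ecd _ dL'].
  have cL : c \notin L := conn_notin Zc zL.
  case dL : (d \in L).
    left; exists d; split => //.
      apply: contra dL' => Evd; move: dL; rewrite !inE => /andP [_ ->].
      by rewrite andbT.
    apply: conn_step Cc _; rewrite /erestr Ecd Sc /= in_st negb_or.
    apply/andP; split.
      by apply: contraTneq dL => ->.
    apply: contra dL' => Evd; move: dL; rewrite !inE => /andP [_ ->].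
    by rewrite andbT.
  have Zd : connect (erestr L) z d by apply: conn_step Zc _; rewrite /erestr Ecd cL dL.
  have toX s : connect (erestr L) z s -> s \notin L -> ((s == x) || e x s) -> False.
    move=> Zt tL /orP [/eqP Etx|Ext]; first by subst s; rewrite Zt in Cx.
    apply: (negP Cx); apply: conn_step Zt _; by rewrite /erestr e_sym Ext tL xL.
  have Sd : d \notin st v.
    rewrite in_st negb_or; apply/andP; split.
      apply/negP => /eqP Edv; subst d.
      by apply: (toX c Zc cL); apply: (vle_adj Hvx); rewrite e_sym.
    by apply/negP => Evd; apply: (toX d Zd (negbT dL)); apply: (vle_adj Hvx).
  right; split => //.
  by apply: conn_step Cc _; rewrite /erestr Ecd Sc Sd.
case/orP: H => /HP [HG|[Z1 S1 C1]] //.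
  by rewrite in_st eqxx in S1.
by rewrite Z1 in Cy.
Qed.

Lemma conn_all x y z v a : SIL x y z -> vle v x ->
  v \notin vclass x -> v \notin vclass y -> v \notin vclass z ->
  a \in lk x :&: lk y -> ~~ e v a -> connect (erestr (st v)) z a ->
  forall u, [|| u \in vclass x, u \in vclass y | u \in vclass z] -> u \notin st v ->
  connect (erestr (st v)) z u.
Proof.
move=> [/and3P [Nxy Nxz Nyz] /and3P [Exy Exz Eyz] Cx Cy] Hvx vX vY vZ aL Eva Ca u Hu Su.
have Nvy : v != y by apply: contraNneq vY => ->; exact: class_self.
have Nvz : v != z by apply: contraNneq vZ => ->; exact: class_self.
have Nvx : v != x by apply: contraNneq vX => ->; exact: class_self.
have Evy : ~~ e v y by apply: nadj Hvx _ Exy; rewrite eq_sym.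
have Evz : ~~ e v z by apply: nadj Hvx _ Exz; rewrite eq_sym.
move: aL; rewrite !inE => /andP [Exa Eya].
have Sa : a \notin st v.
  rewrite in_st negb_or Eva andbT; apply/negP => /eqP Eav; subst a.
  by rewrite e_sym Eya in Evy.
have Sy : y \notin st v by rewrite in_st negb_or Evy eq_sym Nvy.
have Sz : z \notin st v by rewrite in_st negb_or Evz eq_sym Nvz.
have Cyy : connect (erestr (st v)) z y.
  by apply: conn_step Ca _; rewrite /erestr e_sym Eya Sa Sy.
have ext t : connect (erestr (st v)) z t -> t \notin st v -> u \in vclass t -> connect (erestr (st v)) z u.
  move=> Ct St Hut; case: (eqVneq u t) => [->//|Nut].
  by apply: conn_step Ct _; rewrite /erestr (class_adj Hut Nut) St Su.
case/or3P: Hu => Hu.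
- have Sx : x \notin st v.
    rewrite in_st negb_or eq_sym Nvx /=; apply/negP => Evx.
    case: (eqVneq u x) => [Eux|Nux].
      by subst u; rewrite in_st Evx orbT in Su.
    move: (Hu); rewrite in_class => /andP [Hxu _].
    have := vle_adj Hxu (etrans (e_sym _ _) Evx) => /orP [/eqP Evu|Euv].
      by subst v; rewrite Hu in vX.
    by rewrite in_st e_sym Euv orbT in Su.
  apply: (ext x) => //.
  by apply: conn_step Ca _; rewrite /erestr e_sym Exa Sa Sx.
- exact: (ext y).
- exact: (ext z).
Qed.


Definition Le u := [set w | vle w u].
Definition meas x y z := #|Le x| + #|Le y| + #|Le z|.

Lemma Le_lt v a : vle v a -> ~~ vle a v -> #|Le v| < #|Le a|.
Proof.
move=> Hva Hav; apply: proper_card; apply/properP; split.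
  by apply/subsetP => w; rewrite !inE => H; exact: vle_trans H Hva.
by exists a; rewrite !inE ?vle_refl.
Qed.

Definition minSIL x y z := SIL x y z /\
  forall x' y' z', SIL x' y' z' -> meas x y z <= meas x' y' z'.

Lemma minSIL_sym x y z : minSIL x y z -> minSIL y x z.
Proof.
case=> H M; split; first exact: SIL_sym.
by move=> a b c Habc; rewrite /meas (addnC #|Le y|); exact: M.
Qed.

Definition SILb x y z : bool :=
  [&& [&& x != y, x != z & y != z], [&& ~~ e x y, ~~ e x z & ~~ e y z],
      ~~ connect (erestr (lk x :&: lk y)) z x & ~~ connect (erestr (lk x :&: lk y)) z y].

Lemma SILbP x y z : SIL x y z <-> SILb x y z.
Proof.
split; first by case=> H1 H2 H3 H4; apply/and4P.
by move=> /and4P [H1 H2 H3 H4]; split.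
Qed.

Lemma min_exists : (exists x y z, SIL x y z) -> exists x y z, minSIL x y z.
Proof.
move=> [x [y [z H]]].
pose p n := [exists t : T * T * T, SILb t.1.1 t.1.2 t.2 && (meas t.1.1 t.1.2 t.2 == n)].
have ex : exists n, p n.
  exists (meas x y z); apply/existsP; exists (x, y, z); rewrite /= eqxx andbT.
  exact/SILbP.
case: (ex_minnP ex) => m /existsP [[[x' y'] z'] /andP [Hs /eqP Hm]] Hmin.
exists x', y', z'; split; first exact/SILbP.
move=> a b c Habc; rewrite Hm; apply: Hmin; apply/existsP; exists (a, b, c).
rewrite /= eqxx andbT; exact/SILbP.
Qed.

Lemma minA x y z v : minSIL x y z -> v \notin vclass x -> v \notin vclass y ->
  v \notin vclass z -> vle v z -> False.
Proof.
move=> [H M] vX vY vZ Hvz.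
have HS : SIL x y v.
  have Nvx : v != x by apply: contraNneq vX => ->; exact: class_self.
  have Nvy : v != y by apply: contraNneq vY => ->; exact: class_self.
  exact: K3 H Hvz Nvx Nvy.
have := M _ _ _ HS; rewrite /meas leq_add2l leqNgt (Le_lt Hvz) //.
by apply/negP => Hzv; move: vZ; rewrite in_class Hzv Hvz.
Qed.

Lemma minB x y z v : minSIL x y z -> v \notin vclass x -> v \notin vclass y ->
  v \notin vclass z -> vle v x ->
  exists a, [/\ a \in lk x :&: lk y, ~~ e v a & connect (erestr (st v)) z a].
Proof.
move=> [H M] vX vY vZ Hvx.
have Nvy : v != y by apply: contraNneq vY => ->; exact: class_self.
have Nvz : v != z by apply: contraNneq vZ => ->; exact: class_self.
apply: (K1 H Hvx Nvy Nvz) => HS; have := M _ _ _ HS; rewrite /meas !leq_add2r leqNgt (Le_lt Hvx) //.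
by apply/negP => Hxv; move: vX; rewrite in_class Hxv Hvx.
Qed.

Lemma inGS x y z u :
  (u \in GammaS e x y z) = [|| u \in vclass x, u \in vclass y | u \in vclass z].
Proof. by rewrite /GammaS !in_setU orbA. Qed.

Lemma inGL x y z u :
  (u \in GammaLeS e x y z) = [|| vle u x, vle u y | vle u z].
Proof. by rewrite inE. Qed.

Lemma GP x y z v : minSIL x y z -> v \in GammaLeS e x y z -> v \notin GammaS e x y z ->
  exists r, forall u, u \in GammaS e x y z -> u \notin st v ->
    connect (erestr (st v)) r u.
Proof.
move=> Hm; rewrite inGL inGS !negb_or => HL /and3P [vX vY vZ].
have HS := Hm.1.
case/or3P: HL => Hv.
- have [a [aL Eva Ca]] := minB Hm vX vY vZ Hv.
  exists z => u; rewrite inGS => Hu Su.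
  exact: (conn_all HS Hv vX vY vZ aL Eva Ca Hu Su).
- have [a [aL Eva Ca]] := minB (minSIL_sym Hm) vY vX vZ Hv.
  exists z => u; rewrite inGS => Hu Su.
  apply: (conn_all (SIL_sym HS) Hv vY vX vZ aL Eva Ca _ Su).
  by case/or3P: Hu => ->; rewrite ?orbT.
- by exfalso; exact: (minA Hm vX vY vZ Hv).
Qed.

Lemma GTx x y z w a t : SIL x y z -> vle w x -> w \notin vclass x ->
  a \in lk x :&: lk y -> ~~ e w a -> connect (erestr (st w)) z a ->
  vle t w -> [|| t == x, t == y | t == z] -> False.
Proof.
move=> [/and3P [Nxy Nxz Nyz] /and3P [Exy Exz Eyz] Cx Cy] Hwx wX aL Ewa Ca Htw.
move: aL; rewrite !inE => /andP [Exa Eya].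
case/or3P => /eqP Et; subst t.
- by move: wX; rewrite in_class Htw Hwx.
- have := vle_adj Htw Eya => /orP [/eqP Eaw|Ewa']; last by rewrite Ewa' in Ewa.
  subst a.
  have Ewy : ~~ e w y by apply: nadj Hwx _ Exy; rewrite eq_sym.
  by rewrite e_sym Eya in Ewy.
- have Nza : z != a by apply: contraNneq Exz => ->.
  have [c [/and3P [Ezc _ Sc] _]] := conn_first Ca Nza.
  by have := vle_adj Htw Ezc; rewrite -in_st (negbTE Sc).
Qed.

Lemma GT x y z v w : minSIL x y z -> v \in GammaS e x y z ->
  w \in GammaLeS e x y z -> w \notin GammaS e x y z -> vle v w -> False.
Proof.
move=> Hm; rewrite inGS inGL inGS !negb_or => Hv HL /and3P [wX wY wZ] Hvw.
have HS := Hm.1.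
have [t [Ht Htv]] : exists t, [|| t == x, t == y | t == z] /\ vle t v.
  case/or3P: Hv => Hv; [exists x | exists y | exists z];
    by rewrite eqxx ?orbT; move: Hv; rewrite in_class => /andP [].
have Htw := vle_trans e_sym Htv Hvw.
case/or3P: HL => Hw.
- have [a [aL Ewa Ca]] := minB Hm wX wY wZ Hw.
  exact: (GTx HS Hw wX aL Ewa Ca Htw Ht).
- have [a [aL Ewa Ca]] := minB (minSIL_sym Hm) wY wX wZ Hw.
  apply: (GTx (SIL_sym HS) Hw wY aL Ewa Ca Htw).
  by case/or3P: Ht => ->; rewrite ?orbT.
- exact: (minA Hm wX wY wZ Hw).
Qed.

End Comb.


Section Final.
Variables (T : finType) (e : rel T).
Hypotheses (e_sym : symmetric e).
Local Notation W := (weq e).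
#[local] Instance weq_equiv3 : Equivalence W.
Proof. split; [exact: weq_refl | exact: weq_sym | exact: weq_trans]. Qed.

Lemma PC_elem_id (S L : {set T}) g h : S \subset L -> Defs.over L h ->
  (forall u, u \in S -> W (erase L (g u)) (h ++ [:: (u, false)] ++ winv h)) ->
  PC e S L g.
Proof.
move=> SL Hh Hg.
apply: (PC_elem (sigma := fun u => [:: (u, false)]) (tau := fun u => [:: (u, false)]) SL Hh Hg).
- by move=> u Hu /=; rewrite Hu.
- by move=> u Hu /=; rewrite Hu.
- by move=> u Hu; rewrite /wsubst /=; reflexivity.
Qed.

Lemma elem_PC (S L : {set T}) g : S \subset L ->
  (forall v w, v \in S -> w \in L -> w \notin S -> vle e v w -> False) ->
  (forall v, v \in L -> v \notin S -> exists r, forall u, u \in S -> u \notin st e v ->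
      connect (erestr e (st e v)) r u) ->
  elem_aut e g -> PC e S L g.
Proof.
move=> SL GT GP.
have SLu u : u \in S -> u \in L by move=> Hu; exact: (subsetP SL).
case=> [v w b Hvw Nvw|v w b Hvw Nvw|v C b HC Hcl].
- have Nwv : (w == v) = false by apply/negbTE; rewrite eq_sym.
  case vS : (v \in S); last first.
    apply: (PC_elem_id (h := [::])) => // u Hu.
    have -> : (u == v) = false by apply: contraTF Hu => /eqP ->; rewrite vS.
    by rewrite /= /winv /erase /= (SLu _ Hu); reflexivity.
  case wS : (w \in S).
    apply: (PC_elem (h := [::]) (sigma := fun u => if u == v then [:: (w, b); (v, false)] else [:: (u, false)])
                    (tau := fun u => if u == v then [:: (w, ~~ b); (v, false)] else [:: (u, false)])) => //.
    + move=> u Hu /=; rewrite ?cats0 erase_over; first reflexivity.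
      by apply: (over_sub SL); case: ifP => _ /=; rewrite ?wS ?vS ?Hu.
    + by move=> u Hu; case: ifP => _ /=; rewrite ?wS ?vS ?Hu.
    + by move=> u Hu; case: ifP => _ /=; rewrite ?wS ?vS ?Hu.
    + move=> u Hu; case: (eqVneq u v) => [->|Nuv].
        rewrite /wsubst /= Nwv eqxx /=.
        by case: b => /=; [exact: (weq_red1 e (w, false) [:: (v, false)]) | exact: (weq_red1 e (w, true) [:: (v, false)])].
      by rewrite /wsubst /= (negbTE Nuv); reflexivity.
  case wL : (w \in L).
    by exfalso; apply: (GT v w) => //; rewrite wS.
  apply: (PC_elem_id (h := [::])) => // u Hu.
  case: (eqVneq u v) => [->|_]; rewrite /= /winv /erase /= ?wL ?(SLu _ Hu) ?(SLu _ vS) /=; reflexivity.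
- have Nwv : (w == v) = false by apply/negbTE; rewrite eq_sym.
  case vS : (v \in S); last first.
    apply: (PC_elem_id (h := [::])) => // u Hu.
    have -> : (u == v) = false by apply: contraTF Hu => /eqP ->; rewrite vS.
    by rewrite /= /winv /erase /= (SLu _ Hu); reflexivity.
  case wS : (w \in S).
    apply: (PC_elem (h := [::]) (sigma := fun u => if u == v then [:: (v, false); (w, b)] else [:: (u, false)])
                    (tau := fun u => if u == v then [:: (v, false); (w, ~~ b)] else [:: (u, false)])) => //.
    + move=> u Hu /=; rewrite ?cats0 erase_over; first reflexivity.
      by apply: (over_sub SL); case: ifP => _ /=; rewrite ?wS ?vS ?Hu.
    + by move=> u Hu; case: ifP => _ /=; rewrite ?wS ?vS ?Hu.
    + by move=> u Hu; case: ifP => _ /=; rewrite ?wS ?vS ?Hu.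
    + move=> u Hu; case: (eqVneq u v) => [->|Nuv].
        rewrite /wsubst /= Nwv eqxx /=.
        by case: b => /=; [exact: (weq_red e [:: (v, false)] [::] w true) | exact: (weq_red e [:: (v, false)] [::] w false)].
      by rewrite /wsubst /= (negbTE Nuv); reflexivity.
  case wL : (w \in L).
    by exfalso; apply: (GT v w) => //; rewrite wS.
  apply: (PC_elem_id (h := [::])) => // u Hu.
  case: (eqVneq u v) => [->|_]; rewrite /= /winv /erase /= ?wL ?(SLu _ Hu) ?(SLu _ vS) /=; reflexivity.
- have notst u : u \in C -> u \notin st e v.
    by move=> Hu; have := subsetP HC u Hu; rewrite inE.
  have vC : v \notin C by apply/negP => /notst; rewrite /st in_setU1 eqxx.
  case vS : (v \in S).
    apply: (PC_elem (h := [::])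
      (sigma := fun u => if u \in C then [:: (v, b); (u, false); (v, ~~ b)] else [:: (u, false)])
      (tau := fun u => if u \in C then [:: (v, ~~ b); (u, false); (v, b)] else [:: (u, false)])) => //.
    + move=> u Hu /=; rewrite ?cats0 erase_over; first reflexivity.
      by apply: (over_sub SL); case: ifP => _ /=; rewrite ?vS ?Hu.
    + by move=> u Hu; case: ifP => _ /=; rewrite ?vS ?Hu.
    + by move=> u Hu; case: ifP => _ /=; rewrite ?vS ?Hu.
    + move=> u Hu; case uC : (u \in C).
        rewrite /wsubst /= (negbTE vC) uC /=.
        case: b => /=.
          exact: (weq_trans (weq_red e [::] _ v false) (weq_red e [:: (u, false)] [::] v false)).
        exact: (weq_trans (weq_red e [::] _ v true) (weq_red e [:: (u, false)] [::] v true)).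
      by rewrite /wsubst /= uC /=; reflexivity.
  case vL : (v \in L); last first.
    apply: (PC_elem_id (h := [::])) => // u Hu.
    by case: ifP => _; rewrite /= /winv /erase /= ?vL (SLu _ Hu) /=; reflexivity.
  have [r Hr] := GP v vL (negbT vS).
  case rC : (r \in C).
    apply: (PC_elem_id (h := [:: (v, b)])) => //=; first by rewrite vL.
    move=> u Hu; case uC : (u \in C).
      by rewrite /= /winv /erase /= vL (SLu _ Hu) /=; reflexivity.
    have Su : u \in st e v.
      by apply: contraFT uC => Su; apply: (Hcl r) => //; exact: Hr.
    have Evu : e v u.
      move: Su; rewrite /st in_setU1 => /orP [/eqP Euv|]; last by rewrite inE.
      by subst u; rewrite Hu in vS.
    rewrite /= /winv /erase /= (SLu _ Hu) /rev /=.
    symmetry; apply: weq_trans (weq_comm [::] [:: (v, ~~ b)] b false Evu) _.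
    exact: (weq_red e [:: (u, false)] [::] v b).
  apply: (PC_elem_id (h := [::])) => // u Hu.
  have uC : (u \in C) = false.
    apply/negP => uC; have Su := notst u uC; have := Hr u Hu Su.
    rewrite (sym_connect_sym (erestr_sym e_sym (st e v))) => /(Hcl u r uC).
    by rewrite rC.
  by rewrite uC /= /winv /erase /= (SLu _ Hu); reflexivity.
Qed.

End Final.

Theorem proposition3p9 (T : finType) (e : rel T)
  (e_sym : symmetric e) (e_irr : irreflexive e)
  (hab : forall u : T, abelian_class e u) :
  (exists x y z : T, SIL e x y z) ->
  exists x y z : T, special_SIL e x y z.
Proof.
move=> H; have [x [y [z Hm]]] := min_exists H.
exists x, y, z; split; [exact: Hm.1 | exact: hab | exact: hab | exact: hab |].
move=> phi Hphi.
have SL : GammaS e x y z \subset GammaLeS e x y z.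
  apply/subsetP => u; rewrite inGS inGL.
  by case/or3P; rewrite in_class => /andP [_ ->]; rewrite ?orbT.
have Ldown : forall u w, vle e u w -> w \in GammaLeS e x y z -> u \in GammaLeS e x y z.
  move=> u w Huw; rewrite !inGL.
  by case/or3P => Hw; rewrite (vle_trans e_sym Huw Hw) ?orbT.
change (PC e (GammaS e x y z) (GammaLeS e x y z) phi).
elim: Hphi => [|f g Hf IH Hg]; first exact: PC_id.
apply: PC_comp => //.
- exact: aut0_adjcomm.
- exact: aut0_kill.
- apply: (elem_PC e_sym SL) => //.
    by move=> v w Hv Hw Nw Hvw; exact: (GT e_sym e_irr Hm Hv Hw Nw Hvw).
  by move=> v Hv Nv; exact: (GP e_sym e_irr hab Hm Hv Nv).
Qed.
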